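(* Let $u$ be a fast decreasing distribution on $\mathbb R^D$ (acting on $\mathbb C[\boldsymbol x]$), $\mathcal Q_2\in\mathbb C[\boldsymbol x]$ with $Z(\mathcal Q_2)\cap\operatorname{supp}u=\varnothing$, and $\check u$ a linear functional on $\mathbb C[\boldsymbol x]$ with $\mathcal Q_2\check u=u$; assume $u,\check u$ quasi-definite. Let $R=\langle\check u,P(\boldsymbol x)\chi(\boldsymbol x)^\top\rangle$ and $\omega_1=\check SS^{-1}$. Then: (1) the truncations $R^{[k]}$ are nonsingular for all $k\ge1$; (2) for each $k\ge1$, $\big((\omega_1)_{[k],[0]},\dots,(\omega_1)_{[k],[k-1]}\big)=-\big(R_{[k],[0]},\dots,R_{[k],[k-1]}\big)\big(R^{[k]}\big)^{-1}$; (3) consequently, for $l\in\{0,\dots,k-1\}$, $(\omega_1)_{[k],[l]}=-\big(R_{[k],[0]},\dots,R_{[k],[k-1]}\big)\big(R^{[k]}\big)^{-1}E_l$, where $E_l$ is the block column with identity block $\mathbb I_{[l]}$ in block position $l$ and zero blocks elsewhere.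
   Context: $D\ge1$, $\boldsymbol x=(x_1,\dots,x_D)^\top$. For $k\in\mathbb Z_+$, $[k]=\{\boldsymbol\alpha\in\mathbb Z_+^D:|\boldsymbol\alpha|=k\}$. Multi-indices are ordered by graded lexicographic order; $\chi(\boldsymbol x)$ is the semi-infinite vector of monomials $\boldsymbol x^{\boldsymbol\alpha}$ in this order with blocks $\chi_{[k]}=(\boldsymbol x^{\boldsymbol\alpha})_{\boldsymbol\alpha\in[k]}$; semi-infinite matrices are partitioned in blocks $A_{[k],[l]}\in\mathbb C^{|[k]|\times|[l]|}$, and $A^{[k]}$ is the truncation to block rows/columns $0,\dots,k-1$. For a linear functional $u$ on $\mathbb C[\boldsymbol x]$ (applied entrywise to matrices), $\langle Qu,P\rangle:=\langle u,QP\rangle$; moment matrix $G=\langle u,\chi\chi^\top\rangle$; $u$ is quasi-definite if $\det G^{[k]}\ne0$ for all $k$, and then $G=S^{-1}HS^{-\top}$ (Cholesky) with $S$ block lower unitriangular, $H$ block diagonal; the monic multivariate orthogonal polynomials are $P(\boldsymbol x)=S\chi(\boldsymbol x)$ with blocks $P_{[k]}$. $\check S,\check H,\check P$ denote the same objects for $\check u$. *)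

(* Defs.v *)
From HB Require Import structures.
From mathcomp Require Import all_boot all_order all_algebra.
From mathcomp Require Import complex.
From mathcomp Require Import reals.
From mathcomp Require Import mpoly.

Set Implicit Arguments.
Unset Strict Implicit.
Unset Printing Implicit Defensive.

Import Order.TTheory GRing.Theory Num.Theory.
Local Open Scope ring_scope.

Section MOPDefs.
Variables (C : fieldType) (D : nat).

(* Semi-infinite matrices, rows and columns indexed by multi-indices
   alpha in Z_+^D.  The block [k] consists of the alpha with mdeg alpha = k;
   block (A_{[k],[l]}) is the restriction of A to [k] x [l]. *)
Definition smat := 'X_{1..D} -> 'X_{1..D} -> C.

Definition mono (a : 'X_{1..D}) : {mpoly C[D]} := 'X_[a].

Definition lin_functional (u : {mpoly C[D]} -> C) : Prop :=
  forall (a : C) (p q : {mpoly C[D]}), u (a *: p + q) = a * u p + u q.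

Definition moment (u : {mpoly C[D]} -> C) : smat :=
  fun a b => u (mono a * mono b).

(* truncation A^{[k]} : block rows/columns 0..k-1, i.e. the multi-indices of
   total degree < k (enumerated through the finite type 'X_{1..D < k}) *)
Definition ev (k : nat) (i : 'I_#|{: 'X_{1..D < k}}|) : 'X_{1..D} :=
  bmnm (enum_val i : 'X_{1..D < k}).

Definition trunc (A : smat) (k : nat) : 'M[C]_#|{: 'X_{1..D < k}}| :=
  \matrix_(i, j) A (ev i) (ev j).

(* row alpha of the block row (A_{[k],[0]}, ..., A_{[k],[k-1]}) *)
Definition rowblk (A : smat) (a : 'X_{1..D}) (k : nat) : 'rV[C]_#|{: 'X_{1..D < k}}| :=
  \row_j A a (ev j).

Definition quasi_definite (u : {mpoly C[D]} -> C) : Prop :=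
  forall k : nat, \det (trunc (moment u) k) != 0.

Definition delta : smat := fun a b => (a == b)%:R.

Definition blk_lower_unitri (S : smat) : Prop :=
  (forall a b, (mdeg a < mdeg b)%N -> S a b = 0) /\
  (forall a b, mdeg a = mdeg b -> S a b = delta a b).

Definition blk_diag (H : smat) : Prop :=
  forall a b, mdeg a != mdeg b -> H a b = 0.

(* product L * A with L block lower triangular (row alpha of L is supported on
   the multi-indices of degree <= |alpha|) *)
Definition lmulL (L A : smat) : smat :=
  fun a c => \sum_(b : 'X_{1..D < (mdeg a).+1}) L a b * A b c.

(* product A * L^T with L block lower triangular *)
Definition rmulT (A L : smat) : smat :=
  fun a c => \sum_(b : 'X_{1..D < (mdeg c).+1}) A a b * L c b.

(* Cholesky factorization G = S^{-1} H S^{-T}, written as S G S^T = H *)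
Definition cholesky (u : {mpoly C[D]} -> C) (S H : smat) : Prop :=
  [/\ blk_lower_unitri S, blk_diag H & rmulT (lmulL S (moment u)) S = H].

(* Si = S^{-1} (inverse in the algebra of block lower triangular matrices) *)
Definition inverse_lower (S Si : smat) : Prop :=
  [/\ blk_lower_unitri Si, lmulL S Si = delta & lmulL Si S = delta].

Definition MOP (S : smat) (a : 'X_{1..D}) : {mpoly C[D]} :=
  \sum_(b : 'X_{1..D < (mdeg a).+1}) S a b *: mono b.

Definition Rmat (uc : {mpoly C[D]} -> C) (S : smat) : smat :=
  fun a b => uc (MOP S a * mono b).

Definition Blk (l : nat) := {b : 'X_{1..D < l.+1} | mdeg b == l}.

Definition Emat (l k : nat) : 'M[C]_(#|{: 'X_{1..D < k}}|, #|{: Blk l}|) :=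
  \matrix_(i, j) (ev i == bmnm (val (enum_val j : Blk l)))%:R.

(* row alpha of the block (A_{[k],[l]}) *)
Definition rowblk_l (A : smat) (a : 'X_{1..D}) (l : nat) : 'rV[C]_#|{: Blk l}| :=
  \row_j A a (bmnm (val (enum_val j : Blk l))).

End MOPDefs.

(* Main.v *)
Require Import Defs.
From HB Require Import structures.
From mathcomp Require Import all_boot all_order all_algebra.
From mathcomp Require Import complex.
From mathcomp Require Import reals.
From mathcomp Require Import mpoly.
Import Order.TTheory GRing.Theory Num.Theory.
Local Open Scope ring_scope.

Section Helpers.
Variables (C : fieldType) (D : nat).
Local Notation X := 'X_{1..D}.

Definition mons (n : nat) : seq X := map val (enum {: 'X_{1..D < n}}).

Lemma mem_mons n m : (m \in mons n) = (mdeg m < n)%N.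
Proof.
apply/idP/idP.
- by case/mapP=> b _ ->; exact: bmdeg.
- move=> h; apply/mapP; exists (BMultinom h) => //; by rewrite mem_enum.
Qed.

Lemma uniq_mons n : uniq (mons n).
Proof. rewrite map_inj_uniq ?enum_uniq //; exact: val_inj. Qed.

Lemma sum_bX {V : nmodType} n (F : X -> V) :
  \sum_(b : 'X_{1..D < n}) F (bmnm b) = \sum_(m <- mons n) F m.
Proof. by rewrite big_map big_enum. Qed.

Lemma ev_inj k : injective (@ev D k).
Proof. move=> i j /val_inj; exact: enum_val_inj. Qed.

Lemma sum_ord {V : nmodType} k (F : X -> V) :
  \sum_(l < #|{: 'X_{1..D < k}}|) F (ev l) = \sum_(m <- mons k) F m.
Proof.
rewrite -sum_bX (reindex (@enum_rank _)) /=; last first.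
  by apply: onW_bij; exact: enum_rank_bij.
by apply: eq_bigr => b _; rewrite /ev enum_rankK.
Qed.

Lemma sum_widen {V : nmodType} n N (F : X -> V) : (n <= N)%N ->
  \sum_(m <- mons n) F m = \sum_(m <- mons N | (mdeg m < n)%N) F m.
Proof.
move=> le; rewrite -[RHS]big_filter; apply: perm_big.
apply: uniq_perm; rewrite ?filter_uniq ?uniq_mons //.
move=> m; rewrite mem_filter !mem_mons; apply/idP/andP => [h|[]//]; split=>//.
exact: leq_trans h le.
Qed.

Lemma sum_tri {V : nmodType} (a : X) N (G : X -> V) : (mdeg a < N)%N ->
  (forall m, (mdeg a < mdeg m)%N -> G m = 0) ->
  \sum_(m <- mons (mdeg a).+1) G m = \sum_(m <- mons N) G m.
Proof.
move=> lt hG; rewrite (sum_widen _ _ G lt) [RHS](bigID (fun m => (mdeg m < (mdeg a).+1)%N)) /=.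
rewrite [X in _ = _ + X]big1 ?addr0 // => m; rewrite ltnS -ltnNge; exact: hG.
Qed.

Lemma sum_delta {V : nmodType} (s : seq X) (e : X) (G : X -> V) : uniq s -> e \in s ->
  \sum_(m <- s) (if e == m then G m else 0) = G e.
Proof.
move=> us es; rewrite (bigD1_seq e) //= eqxx big1 ?addr0 // => m.
by rewrite eq_sym => /negbTE ->.
Qed.

Lemma sum_mons_eq {V : nmodType} n (F G : X -> V) :
  (forall m, (mdeg m < n)%N -> F m = G m) ->
  \sum_(m <- mons n) F m = \sum_(m <- mons n) G m.
Proof. move=> h; apply: eq_big_seq => m; rewrite mem_mons; exact: h. Qed.

Lemma lin0 (u : {mpoly C[D]} -> C) : lin_functional u -> u 0 = 0.
Proof.
move=> L; have := L 1 0 0; rewrite scale1r addr0 mul1r => h.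
by apply: (addrI (u 0)); rewrite -h addr0.
Qed.

Lemma lin_sum (u : {mpoly C[D]} -> C) (s : seq X) (c : X -> C) (p : X -> {mpoly C[D]}) :
  lin_functional u -> u (\sum_(m <- s) c m *: p m) = \sum_(m <- s) c m * u (p m).
Proof.
move=> L; elim: s => [|x s IH]; first by rewrite !big_nil lin0.
by rewrite !big_cons L IH.
Qed.

Lemma delta_if (b : bool) (x : C) : (b%:R * x) = if b then x else 0.
Proof. by case: b; rewrite ?mul1r ?mul0r. Qed.

Variables (uc : {mpoly C[D]} -> C) (S Sc Hc Si : smat C D).
Hypothesis Luc : lin_functional uc.
Hypothesis HS : blk_lower_unitri S.
Hypothesis HSi : blk_lower_unitri Si.
Hypothesis chc : cholesky uc Sc Hc.
Hypothesis invS : inverse_lower S Si.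

Local Notation Gm := (moment uc).
Local Notation Rm := (Rmat uc S).
Local Notation w1 := (lmulL Sc Si).

Lemma Rm_expand m c N : (mdeg m < N)%N ->
  Rm m c = \sum_(f <- mons N) S m f * Gm f c.
Proof.
move=> lt; rewrite /Rmat /MOP (sum_bX _ (fun b => S m b *: mono C b)) mulr_suml.
under eq_bigr do rewrite -scalerAl.
rewrite lin_sum //; apply: sum_tri => // f lf.
by case: HS => z _; rewrite z ?mul0r.
Qed.

Lemma lmulL_expand (L A : smat C D) a c N : (mdeg a < N)%N ->
  (forall b, (mdeg a < mdeg b)%N -> L a b = 0) ->
  lmulL L A a c = \sum_(f <- mons N) L a f * A f c.
Proof.
move=> lt z; rewrite /lmulL (sum_bX _ (fun b => L a b * A b c)).
by apply: sum_tri => // f lf; rewrite z ?mul0r.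
Qed.

Lemma orth c a : (mdeg c < mdeg a)%N -> lmulL Sc Gm a c = 0.
Proof.
case: chc => [[zSc dSc] dH eH].
have [n] := ubnP (mdeg c); elim: n c => // n IH c; rewrite ltnS => lec lt.
have : Hc a c = 0 by apply: dH; rewrite neq_ltn lt orbT.
rewrite -eH /rmulT (sum_bX _ (fun b => lmulL Sc Gm a b * Sc c b)).
rewrite (@sum_mons_eq _ _ _ (fun f => if c == f then lmulL Sc Gm a f else 0)).
  by rewrite sum_delta ?uniq_mons ?mem_mons.
move=> f; rewrite ltnS leq_eqVlt => /orP[/eqP e|l].
  by rewrite (dSc c f (esym e)) /delta mulrC delta_if.
have -> : (c == f) = false by apply/negbTE; apply/eqP => e; move: l; rewrite e ltnn.
rewrite IH ?mul0r //; first exact: leq_trans l lec.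
exact: ltn_trans l lt.
Qed.

Lemma w1_diag a m : mdeg m = mdeg a -> w1 a m = (a == m)%:R.
Proof.
case: chc => [[zSc dSc] _ _] e.
rewrite /lmulL (sum_bX _ (fun b => Sc a b * Si b m)).
rewrite (@sum_mons_eq _ _ _ (fun f => if a == f then Si f m else 0)).
  rewrite sum_delta ?uniq_mons ?mem_mons //.
  by case: HSi => _ ->.
move=> f; rewrite ltnS leq_eqVlt => /orP[/eqP ef|l].
  by rewrite dSc // /delta delta_if.
have -> : (a == f) = false by apply/negbTE; apply/eqP => ef; move: l; rewrite ef ltnn.
by case: HSi => z _; rewrite z ?mulr0 // e.
Qed.

Lemma trunc_Rm k : trunc Rm k = trunc S k *m trunc Gm k.
Proof.
apply/matrixP => i j; rewrite !mxE (Rm_expand _ _ _ (bmdeg _)).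
under [RHS]eq_bigr do rewrite !mxE.
by rewrite (sum_ord _ (fun m => S (ev i) m * Gm m (ev j))).
Qed.

Lemma trunc_SiS k : trunc Si k *m trunc S k = 1%:M.
Proof.
apply/matrixP => i j; rewrite !mxE.
under eq_bigr do rewrite !mxE.
rewrite (sum_ord _ (fun m => Si (ev i) m * S m (ev j))).
case: invS => _ _ e.
rewrite -(lmulL_expand Si S (ev i) (ev j) k (bmdeg _)); last by case: HSi => z _ b; exact: z.
by rewrite e /delta (inj_eq (@ev_inj k)).
Qed.

Lemma part1 k : \det (trunc Gm k) != 0 -> trunc Rm k \in unitmx.
Proof.
move=> d; rewrite trunc_Rm unitmx_mul; apply/andP; split.
  by have [] := mulmx1_unit (trunc_SiS k).
by rewrite unitmxE unitfE.
Qed.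

Lemma part2 k a : (0 < k)%N -> mdeg a = k ->
  rowblk w1 a k *m trunc Rm k = - rowblk Rm a k.
Proof.
move=> k0 ea; apply/rowP => j; rewrite !mxE.
under eq_bigr do rewrite !mxE.
set c := ev j.
have cl : (mdeg c < k)%N by apply: bmdeg.
rewrite (sum_ord _ (fun m => w1 a m * Rm m c)).
have full : \sum_(m <- mons k.+1) w1 a m * Rm m c = 0.
  case: chc => [[zSc _] _ _]; case: invS => _ _ eSiS.
  rewrite (@sum_mons_eq _ _ _ (fun m => \sum_(e <- mons k.+1)
      Sc a e * (Si e m * \sum_(f <- mons k.+1) S m f * Gm f c))); last first.
    move=> m lm; rewrite (lmulL_expand _ _ _ _ k.+1); last 2 first.
    - by rewrite ea.
    - by move=> b; apply: zSc.
    rewrite (Rm_expand _ _ k.+1) //.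
    by rewrite mulr_suml; apply: eq_bigr => e _; rewrite mulrA.
  rewrite exchange_big /=.
  rewrite (@sum_mons_eq _ _ _ (fun e => Sc a e * Gm e c)); last first.
    move=> e le; rewrite -mulr_sumr; congr (_ * _).
    under eq_bigr do rewrite mulr_sumr.
    rewrite exchange_big /=.
    rewrite (@sum_mons_eq _ _ _ (fun f => if e == f then Gm f c else 0)).
      by rewrite sum_delta ?uniq_mons ?mem_mons.
    move=> f lf; under eq_bigr do rewrite mulrA.
    rewrite -mulr_suml -(lmulL_expand Si S e f _ le); last first.
      by case: HSi => z _ b; apply: z.
    by rewrite eSiS /delta delta_if.
  rewrite -(lmulL_expand Sc Gm a c k.+1); first by rewrite orth ?ea.
    by rewrite ea.
  by move=> b; apply: zSc.
have split : \sum_(m <- mons k.+1) w1 a m * Rm m c =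
    \sum_(m <- mons k) w1 a m * Rm m c + Rm a c.
  rewrite (bigID (fun m => (mdeg m < k)%N)) /= -sum_widen //; congr (_ + _).
  rewrite big_mkcond /=.
  rewrite (@sum_mons_eq _ _ _ (fun m => if a == m then Rm m c else 0)).
    by rewrite sum_delta ?uniq_mons ?mem_mons ?ea.
  move=> m; rewrite ltnS leq_eqVlt => /orP[/eqP em|l].
    by rewrite em ltnn /= w1_diag ?em ?ea // delta_if.
  rewrite l /=; have -> // : (a == m) = false.
  by apply/negbTE; apply/eqP => e; move: l; rewrite -e ea ltnn.
by apply/eqP; rewrite -addr_eq0 -split full.
Qed.

Hypothesis qd : quasi_definite uc.

Lemma part2' k a : (0 < k)%N -> mdeg a = k ->
  rowblk w1 a k = - (rowblk Rm a k *m invmx (trunc Rm k)).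
Proof.
move=> k0 ea; have U := part1 k (qd k).
by rewrite -mulNmx -part2 // mulmxK.
Qed.

Lemma part3 k l a : (l < k)%N -> mdeg a = k ->
  rowblk_l w1 a l = - (rowblk Rm a k *m invmx (trunc Rm k) *m @Emat C D l k).
Proof.
move=> lk ea; have k0 : (0 < k)%N by apply: leq_ltn_trans lk.
rewrite -mulNmx -part2' //.
apply/rowP => j; rewrite !mxE.
under eq_bigr do rewrite !mxE.
set b := bmnm (val (enum_val j)).
have bl : mdeg b = l by apply/eqP; exact: (valP (enum_val j)).
rewrite (sum_ord _ (fun m => w1 a m * (m == b)%:R)).
rewrite (@sum_mons_eq _ _ _ (fun m => if b == m then w1 a m else 0)).
  by rewrite sum_delta ?uniq_mons ?mem_mons ?bl.
by move=> m _; rewrite mulrC delta_if eq_sym.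
Qed.

End Helpers.

Theorem mainTheorem2 (R : realType) (D : nat)
  (u uc : {mpoly (complex R)[D]} -> complex R) (Q2 : {mpoly (complex R)[D]})
  (S H Sc Hc Si : smat (complex R) D) :
  (0 < D)%N ->
  lin_functional u -> lin_functional uc ->
  (forall p : {mpoly (complex R)[D]}, uc (Q2 * p) = u p) ->
  quasi_definite u -> quasi_definite uc ->
  cholesky u S H -> cholesky uc Sc Hc -> inverse_lower S Si ->
  let Rm := Rmat uc S in
  let w1 := lmulL Sc Si in
  (forall k : nat, (0 < k)%N -> trunc Rm k \in unitmx) /\
  (forall (k : nat) (a : 'X_{1..D}), (0 < k)%N -> mdeg a = k ->
     rowblk w1 a k = - (rowblk Rm a k *m invmx (trunc Rm k))) /\
  (forall (k l : nat) (a : 'X_{1..D}), (l < k)%N -> mdeg a = k ->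
     rowblk_l w1 a l = - (rowblk Rm a k *m invmx (trunc Rm k) *m @Emat (complex R) D l k)).
Proof.
move=> _ _ Luc _ _ qd [HS _ _] chc invS Rm w1.
have HSi : blk_lower_unitri Si by case: invS.
split; first by move=> k _; exact: (@part1 _ D uc S Si Luc HS HSi invS k (qd k)).
split.
- move=> k a; exact: (@part2' _ D uc S Sc Hc Si Luc HS HSi chc invS qd k a).
- move=> k l a; exact: (@part3 _ D uc S Sc Hc Si Luc HS HSi chc invS qd k l a).
Qed.
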